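(* For every $r>0$, every nonzero $\vec\theta\in\mathbb C^m$ and every $N\ge0$, there exists $\eta\in\mathrm{Sqz}^m$ such that \[{}^t(G_\eta\vec\mu_{\vec\theta})\,\Sigma_{\eta,N}^{-1}\,(G_\eta\vec\mu_{\vec\theta})=\frac{4r^2\|\vec\theta\|^2}{(2N+1)r^2+1}.\]
   Context: $\mathrm{Sqz}^m$ is the set of complex $2m\times2m$ matrices $\eta=\begin{pmatrix}A&S\\ \bar S&\bar A\end{pmatrix}$ with $A\in\mathbb C^{m\times m}$ anti-hermitian ($A^*=-A$) and $S\in\mathbb C^{m\times m}$ symmetric. For $\vec\theta\in\mathbb C^m$, $\vec\mu_{\vec\theta}=({}^t\mathrm{Re}\,\vec\theta,{}^t\mathrm{Im}\,\vec\theta)^t\in\mathbb R^{2m}$. Further \[G_\eta=\exp\begin{pmatrix}\mathrm{Re}A+\mathrm{Re}S&-\mathrm{Im}A+\mathrm{Im}S\\ \mathrm{Im}A+\mathrm{Im}S&\mathrm{Re}A-\mathrm{Re}S\end{pmatrix},\qquad \Sigma_{\eta,N}=\frac{2N+1}{4}G_\eta\,{}^tG_\eta+\frac14I_{2m}.\] *)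

(* Defs.v *)
From HB Require Import structures.
From mathcomp Require Import all_boot all_order all_algebra.
From mathcomp Require Import all_classical all_reals all_analysis.
From mathcomp Require Import complex.
Set Implicit Arguments. Unset Strict Implicit. Unset Printing Implicit Defensive.
Import Order.TTheory GRing.Theory Num.Theory.
Local Open Scope ring_scope.

Definition reC (R : Type) (z : R[i]) : R := complex.Re z.
Definition imC (R : Type) (z : R[i]) : R := complex.Im z.

Section Defs.
Variable R : realType.

Definition Remx (m n : nat) (M : 'M[R[i]]_(m, n)) : 'M[R]_(m, n) :=
  map_mx (@reC R) M.
Definition Immx (m n : nat) (M : 'M[R[i]]_(m, n)) : 'M[R]_(m, n) :=
  map_mx (@imC R) M.
Definition conjmx (m n : nat) (M : 'M[R[i]]_(m, n)) : 'M[R[i]]_(m, n) :=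
  map_mx (@conjc R) M.

Definition expmx (n : nat) (M : 'M[R]_n) : 'M[R]_n :=
  limn (series (fun k : nat => k`!%:R^-1 *: M ^+ k)).

Definition antihermitian (m : nat) (A : 'M[R[i]]_m) : Prop :=
  conjmx A^T = - A.
Definition symmetricmx (m : nat) (S : 'M[R[i]]_m) : Prop := S^T = S.

Definition Sqz (m : nat) (eta : 'M[R[i]]_(m + m)) : Prop :=
  exists A S : 'M[R[i]]_m, antihermitian A /\ symmetricmx S /\
    eta = block_mx A S (conjmx S) (conjmx A).

Definition mu_vec (m : nat) (theta : 'cV[R[i]]_m) : 'cV[R]_(m + m) :=
  col_mx (Remx theta) (Immx theta).

Definition G_eta (m : nat) (eta : 'M[R[i]]_(m + m)) : 'M[R]_(m + m) :=
  let A := ulsubmx eta in let S := ursubmx eta in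
  expmx (block_mx (Remx A + Remx S) (- Immx A + Immx S)
                  (Immx A + Immx S) (Remx A - Remx S)).

Definition Sigma_eta (m : nat) (eta : 'M[R[i]]_(m + m)) (N : R) : 'M[R]_(m + m) :=
  ((2 * N + 1) / 4) *: (G_eta eta *m (G_eta eta)^T) + (1 / 4) *: 1%:M.

Definition normC2 (m : nat) (theta : 'cV[R[i]]_m) : R :=
  \sum_i (reC (theta i 0) ^+ 2 + imC (theta i 0) ^+ 2).

Definition quadform (n : nat) (M : 'M[R]_n) (v : 'cV[R]_n) : R :=
  (v^T *m M *m v) 0 0.
End Defs.

(* Main.v *)
Require Import Defs.
From HB Require Import structures.
From mathcomp Require Import all_boot all_order all_algebra.
From mathcomp Require Import all_classical all_reals all_analysis.
From mathcomp Require Import complex.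
From mathcomp Require Import ring lra.
Import Order.TTheory GRing.Theory Num.Theory.
Local Open Scope ring_scope.

Section E.
Variable R : realType.
Variable n : nat.
Variables P Q : 'M[R]_n.
Hypotheses (PP : P *m P = P) (QQ : Q *m Q = Q) (PQ : P *m Q = 0) (QP : Q *m P = 0).

Lemma mulPQ (x y a b : R) : (x *: P + y *: Q) *m (a *: P + b *: Q) = (x * a) *: P + (y * b) *: Q.
Proof.
rewrite mulmxDl !mulmxDr -!scalemxAl -!scalemxAr PP QQ PQ QP !scaler0 addr0 add0r !scalerA.
by rewrite [x * a]mulrC [y * b]mulrC.
Qed.

Lemma powPQ (s : R) k : (s *: P + (-s) *: Q) ^+ k.+1 = s ^+ k.+1 *: P + (-s) ^+ k.+1 *: Q.
Proof.
elim: k => [|k IH]; first by rewrite !expr1.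
rewrite exprS IH. rewrite -[_ * _]/(_ *m _). by rewrite mulPQ -!exprS.
Qed.

Lemma termPQ (s : R) k : k`!%:R^-1 *: (s *: P + (-s) *: Q) ^+ k =
  (k == 0)%:R *: (1 - P - Q) + exp_coeff s k *: P + exp_coeff (-s) k *: Q.
Proof.
case: k => [|k].
  rewrite expr0 /exp_coeff /= !expr0 fact0 invr1.
  by rewrite scale1r mulr1 !scale1r addrAC subrK subrK.

rewrite (powPQ s k) /exp_coeff /= scale0r add0r scalerDr !scalerA.
by rewrite [_^-1 * s ^+ _]mulrC [_^-1 * (-s) ^+ _]mulrC.
Qed.

Lemma expmxPQ (s : R) : expmx (s *: P + (-s) *: Q) =
  (1 - P - Q) + expR s *: P + expR (-s) *: Q.
Proof.
rewrite /expmx.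
apply: (cvg_lim (@norm_hausdorff _ _)) => //.
have E : forall k, series (fun k : nat => k`!%:R^-1 *: (s *: P + (-s) *: Q) ^+ k) k =
   (0 < k)%:R *: (1 - P - Q) + series (exp_coeff s) k *: P + series (exp_coeff (-s)) k *: Q.
  move=> k; rewrite /series /=.
  under eq_bigr do rewrite termPQ.
  rewrite !big_split /= -!scaler_suml; congr (_ *: _ + _ + _).
  case: k => [|k]; first by rewrite big_geq.
  by rewrite big_nat_recl // /= big1 ?addr0.
rewrite (eq_cvg _ _ E).
apply: cvgD; first apply: cvgD.
- apply: cvg_near_cst; near=> k.
  have -> : (0 < k)%N by near: k; exists 1%N.
  by rewrite scale1r.
- apply: cvgZr_tmp. exact: is_cvg_series_exp_coeff.
- apply: cvgZr_tmp. exact: is_cvg_series_exp_coeff.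
Unshelve. all: by end_near.
Qed.
End E.

Section E2.
Variable R : realType.
Variable n : nat.
Variables P Q : 'M[R]_n.
Hypotheses (PP : P *m P = P) (QQ : Q *m Q = Q) (PQ : P *m Q = 0) (QP : Q *m P = 0).

Definition EPQ (x y z : R) : 'M[R]_n := x *: (1%:M - P - Q) + y *: P + z *: Q.

Lemma KK : (1%:M - P - Q) *m (1%:M - P - Q) = 1%:M - P - Q.
Proof. by rewrite !mulmxBl !mulmxBr !mul1mx !mulmx1 PP QQ PQ QP !subr0 !subrr !subr0. Qed.
Lemma KP : (1%:M - P - Q) *m P = 0.
Proof. by rewrite !mulmxBl mul1mx PP QP subrr subr0. Qed.
Lemma KQ : (1%:M - P - Q) *m Q = 0.
Proof. by rewrite !mulmxBl mul1mx QQ PQ subr0 subrr. Qed.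
Lemma PK : P *m (1%:M - P - Q) = 0.
Proof. by rewrite !mulmxBr mulmx1 PP PQ subrr subr0. Qed.
Lemma QK : Q *m (1%:M - P - Q) = 0.
Proof. by rewrite !mulmxBr mulmx1 QQ QP subr0 subrr. Qed.

Lemma EPQ_mul x y z x' y' z' : EPQ x y z *m EPQ x' y' z' = EPQ (x * x') (y * y') (z * z').
Proof.
rewrite /EPQ !mulmxDl !mulmxDr -!scalemxAl -!scalemxAr KK KP KQ PK QK PP QQ PQ QP !scaler0 !scalerA.
by rewrite !addr0 !add0r.
Qed.

Lemma EPQ1 : EPQ 1 1 1 = 1%:M.
Proof. by rewrite /EPQ !scale1r addrAC subrK subrK. Qed.

Lemma EPQ_inv x y z : x != 0 -> y != 0 -> z != 0 -> invmx (EPQ x y z) = EPQ x^-1 y^-1 z^-1.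
Proof.
move=> x0 y0 z0.
have H : EPQ x y z *m EPQ x^-1 y^-1 z^-1 = 1%:M by rewrite EPQ_mul !divff // EPQ1.
have [U _] := mulmx1_unit H.
by rewrite -[LHS]mulmx1 -H mulmxA mulVmx // mul1mx.
Qed.
Lemma EPQ_tr0 (Pt : P^T = P) (Qt : Q^T = Q) x y z : (EPQ x y z)^T = EPQ x y z.
Proof.
have eP i j : P j i = P i j by rewrite -[in RHS]Pt mxE.
have eQ i j : Q j i = Q i j by rewrite -[in RHS]Qt mxE.
by apply/matrixP => i j; rewrite /EPQ !mxE eP eQ eq_sym.
Qed.
Lemma EPQ_v0 (u : 'cV[R]_n) (Pu : P *m u = u) (Qu : Q *m u = 0) x y z : EPQ x y z *m u = y *: u.
Proof.
by rewrite /EPQ !mulmxDl -!scalemxAl !mulmxBl mul1mx Pu Qu subrr sub0r oppr0 !scaler0 add0r addr0.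
Qed.
Lemma EPQ_lin k l x y z x' y' z' :
  k *: EPQ x y z + l *: EPQ x' y' z' = EPQ (k * x + l * x') (k * y + l * y') (k * z + l * z').
Proof.
rewrite /EPQ; move: (1%:M - P - Q) => K. rewrite !scalerDr !scalerA !scalerDl addrACA; congr (_ + _); by rewrite addrACA.
Qed.
End E2.
Arguments EPQ {R n}.

Section Conc.
Variable R : realType.
Variable m : nat.
Variable theta : 'cV[R[i]]_m.

Let a := Remx theta.
Let b := Immx theta.
Let v : 'cV[R]_(m + m) := col_mx a b.
Let w : 'cV[R]_(m + m) := col_mx (- b) a.
Let c := (v^T *m v) 0 0.

Lemma tr11 (M : 'M[R]_1) : M^T = M.
Proof. by rewrite [M]mx11_scalar tr_scalar_mx. Qed.

Lemma vTv : v^T *m v = c%:M.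
Proof. exact: mx11_scalar. Qed.

Lemma wTw : w^T *m w = c%:M.
Proof.
have trN (x : 'cV[R]_m) : (- x)^T = - x^T by apply/matrixP => i j; rewrite !mxE.
rewrite -vTv /w /v !tr_col_mx !mul_row_col trN mulNmx mulmxN opprK.
by rewrite addrC.
Qed.

Lemma vTw : v^T *m w = 0.
Proof.
rewrite /w /v !tr_col_mx !mul_row_col mulmxN.
have -> : a^T *m b = b^T *m a by rewrite -[LHS]tr11 trmx_mul trmxK.
by rewrite addNr.
Qed.

Lemma wTv : w^T *m v = 0.
Proof. by rewrite -[LHS]tr11 trmx_mul trmxK vTw. Qed.

Lemma c_normC2 : c = normC2 theta.
Proof.
rewrite /c /v tr_col_mx mul_row_col /normC2 mxE big_split /= !mxE.
by congr (_ + _); apply: eq_bigr => i _; rewrite !mxE expr2.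
Qed.

Lemma normC2_gt0 : theta != 0 -> 0 < normC2 theta.
Proof.
move=> nz; rewrite lt_neqAle sumr_ge0 ?andbT; last first.
  by move=> i _; rewrite addr_ge0 // sqr_ge0.
apply/negP => /eqP /esym H; move/negP: nz; apply; apply/eqP/matrixP => i j.
rewrite ord1 mxE.
move: H; rewrite /normC2 => /psumr_eq0P H.
have /eqP := H (fun k _ => addr_ge0 (sqr_ge0 (reC (theta k 0))) (sqr_ge0 (imC (theta k 0)))) i isT.
rewrite paddr_eq0 ?sqr_ge0 // !sqrf_eq0 => /andP [/eqP h1 /eqP h2].
move: h1 h2; rewrite /reC /imC; case: (theta i 0) => x y /= -> -> //.
Qed.

Hypothesis nz : theta != 0.
Let cpos : 0 < c.
Proof. by rewrite c_normC2 normC2_gt0. Qed.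
Let cnz : c != 0.
Proof. by rewrite gt_eqF. Qed.

Let P := c^-1 *: (v *m v^T).
Let Q := c^-1 *: (w *m w^T).

Lemma outer_mul (x y z t : 'cV[R]_(m + m)) : (x *m y^T) *m (z *m t^T) = x *m (y^T *m z) *m t^T.
Proof. by rewrite !mulmxA. Qed.

Lemma PP : P *m P = P.
Proof.
by rewrite /P -scalemxAl -scalemxAr outer_mul vTv mul_mx_scalar -scalemxAl !scalerA divfK.
Qed.
Lemma QQ : Q *m Q = Q.
Proof.
by rewrite /Q -scalemxAl -scalemxAr outer_mul wTw mul_mx_scalar -scalemxAl !scalerA divfK.
Qed.
Lemma PQ : P *m Q = 0.
Proof. by rewrite /P /Q -scalemxAl -scalemxAr outer_mul vTw mulmx0 mul0mx !scaler0. Qed.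
Lemma QP : Q *m P = 0.
Proof. by rewrite /P /Q -scalemxAl -scalemxAr outer_mul wTv mulmx0 mul0mx !scaler0. Qed.
Lemma Pv : P *m v = v.
Proof. by rewrite /P -scalemxAl -mulmxA vTv mul_mx_scalar scalerA mulVf // scale1r. Qed.
Lemma Qv : Q *m v = 0.
Proof. by rewrite /Q -scalemxAl -mulmxA wTv mulmx0 scaler0. Qed.
Lemma Ptr : P^T = P.
Proof. by rewrite /P linearZ /= trmx_mul trmxK. Qed.
Lemma Qtr : Q^T = Q.
Proof. by rewrite /Q linearZ /= trmx_mul trmxK. Qed.

Variable s : R.
Let S : 'M[R[i]]_m := (Complex (s / c) 0) *: (theta *m theta^T).

Lemma trN' n (x : 'cV[R]_n) : (- x)^T = - x^T.
Proof. by apply/matrixP => i j; rewrite !mxE. Qed.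

Lemma Xeq : block_mx (Remx (0 : 'M[R[i]]_m) + Remx S) (- Immx (0 : 'M[R[i]]_m) + Immx S)
   (Immx (0 : 'M[R[i]]_m) + Immx S) (Remx (0 : 'M[R[i]]_m) - Remx S) = s *: P + (-s) *: Q.
Proof.
rewrite /P /Q !scalerA /v /w !tr_col_mx !mul_col_row !trN' !mulNmx !mulmxN !opprK.
rewrite !scale_block_mx add_block_mx.
congr block_mx; apply/matrixP => i j; rewrite !mxE !big_ord1 !mxE /reC /imC;
  case: (theta i 0) => x1 y1; case: (theta j 0) => x2 y2 /=.
all: ring.
Qed.

Lemma EPQ_tr x y z : (EPQ P Q x y z)^T = EPQ P Q x y z.
Proof. exact: (EPQ_tr0 _ _ _ _ Ptr Qtr). Qed.

Lemma EPQm x y z x' y' z' : EPQ P Q x y z *m EPQ P Q x' y' z' = EPQ P Q (x * x') (y * y') (z * z').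
Proof. exact: (EPQ_mul _ _ _ _ PP QQ PQ QP). Qed.

Lemma EPQ_v x y z : EPQ P Q x y z *m v = y *: v.
Proof.
exact: (EPQ_v0 _ _ _ _ _ Pv Qv).
Qed.


Lemma main_res (r N : R) : 0 < r -> 0 <= N -> s = ln r ->
  exists eta : 'M[R[i]]_(m + m), Sqz eta /\
    quadform (invmx (Sigma_eta eta N)) (G_eta eta *m mu_vec theta)
    = 4 * r ^+ 2 * normC2 theta / ((2 * N + 1) * r ^+ 2 + 1).
Proof.
move=> r0 N0 hs.
exists (block_mx 0 S (Defs.conjmx S) (Defs.conjmx 0)); split.
  exists 0, S; split; [|split] => //.
    by rewrite /antihermitian; apply/matrixP => i j; rewrite !mxE conjc0 oppr0.
  by rewrite /Defs.symmetricmx /S linearZ /= trmx_mul trmxK.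
have HG : G_eta (block_mx 0 S (Defs.conjmx S) (Defs.conjmx 0)) = EPQ P Q 1 r r^-1.
  rewrite /G_eta block_mxKul block_mxKur Xeq (expmxPQ _ _ _ _ PP QQ PQ QP) /EPQ scale1r.
  by rewrite hs lnK ?posrE // expRN lnK ?posrE.
rewrite /quadform /Sigma_eta HG EPQ_tr EPQm -(EPQ1 _ _ P Q) EPQ_lin.
have k0 : 0 < (2 * N + 1) / 4 by lra.
have q0 : 0 < 1 / 4 :> R by rewrite divr_gt0.
have rr : 0 < r * r by rewrite mulr_gt0.
have ri : 0 < r^-1 / r by rewrite divr_gt0 ?invr_gt0.
rewrite (EPQ_inv _ _ _ _ PP QQ PQ QP); first last.
- by rewrite gt_eqF // addr_gt0 // mulr_gt0.
- by rewrite gt_eqF // addr_gt0 // mulr_gt0.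
- by rewrite gt_eqF // addr_gt0 // mulr_gt0.
change (mu_vec theta) with v.
rewrite EPQ_v -mulmxA -scalemxAr EPQ_v linearZ /= linearZ /=.
have -> : (r *: v)^T = r *: v^T by apply/matrixP => i j; rewrite !mxE.
rewrite -scalemxAl vTv !mxE eqxx mulr1n c_normC2.
have hb : (2 * N + 1) * r ^+ 2 + 1 != 0 by rewrite gt_eqF // addr_gt0 // mulr_gt0 // ?exprn_gt0 //; lra.
have hb2 : (2 * N + 1) / 4 * (r * r) + 1 / 4 * 1 != 0 by rewrite gt_eqF // addr_gt0 // mulr_gt0.
rewrite mulr1 in hb2.
field; rewrite ?hb ?hb2 //.
Qed.
End Conc.

Theorem lemma31 (R : realType) (m : nat) (r : R) (theta : 'cV[R[i]]_m) (N : R) :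
  0 < r -> theta != 0 -> 0 <= N ->
  exists eta : 'M[R[i]]_(m + m), Sqz eta /\
    quadform (invmx (Sigma_eta eta N)) (G_eta eta *m mu_vec theta)
    = 4 * r ^+ 2 * normC2 theta / ((2 * N + 1) * r ^+ 2 + 1).
Proof.
move=> r0 nz N0.
exact: (@main_res R m theta nz (ln r) r N r0 N0 erefl).
Qed.
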